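(* Let $J,\mu,\Delta\in\mathbb{R}$, $T>0$, let $(\kappa_l)_{l\ge1}$ be any real sequence, and let $N\ge4$ be even. Then for every $k\in\{(2n+1)\pi/N: n=0,\dots,N-1\}$ with $\epsilon(k)>0$, $$\mathscr{E}_J(k)\le\sqrt{2}\,T .$$ In particular $\mathscr{E}_J$ is bounded uniformly in $k$ and $N$, and the uncontrolled quantum Fisher information $I(J)=\big(\sum_k\mathscr{E}_J(k)\big)^2$ satisfies $I(J)\le 2T^2N^2$, so it is at most of Heisenberg scaling.
   Context: Let $f_N(k)=2\sum_{l=1}^{N/2-1}\kappa_l\sin(kl)+\kappa_{N/2}$ and $\epsilon(k)=\sqrt{[\Delta f_N(k)/2]^2+(J\cos k+\mu)^2}$ (the Bogoliubov quasiparticle energy of the long-range Kitaev chain). For a parameter $\theta$, given real functions $a_\theta(k)$ and $\xi_\theta(k)$, set $$\mathscr{E}_\theta(k)=\Big\{T^2a_\theta(k)^2+\tfrac14\xi_\theta(k)^2\sin^2[2\epsilon(k)T]+\tfrac14\xi_\theta(k)^2\big(1-\cos[2\epsilon(k)T]\big)^2\Big\}^{1/2},$$ the single-mode eigenvalues of the estimation generator. For $\theta=J$: $a_J(k)=\partial_J\epsilon(k)=\cos k\,(J\cos k+\mu)/\epsilon(k)$ and $\xi_J(k)=\Delta f_N(k)\cos k/[2\epsilon(k)^2]$. *)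

(* Defs.v *)
From Stdlib Require Import Reals Lra Lia.
Open Scope R_scope.

Fixpoint sumR (m : nat) (g : nat -> R) : R :=
  match m with
  | O => 0
  | S m' => sumR m' g + g (S m')
  end.

Definition fN (kappa : nat -> R) (N : nat) (k : R) : R :=
  2 * sumR (N / 2 - 1)%nat (fun l => kappa l * sin (k * INR l)) + kappa (N / 2)%nat.

Definition eps (kappa : nat -> R) (N : nat) (J mu Delta k : R) : R :=
  sqrt ((Delta * fN kappa N k / 2) ^ 2 + (J * cos k + mu) ^ 2).

Definition Ecal (T a xi e : R) : R :=
  sqrt (T ^ 2 * a ^ 2 + / 4 * xi ^ 2 * (sin (2 * e * T)) ^ 2
        + / 4 * xi ^ 2 * (1 - cos (2 * e * T)) ^ 2).

Definition a_J (kappa : nat -> R) (N : nat) (J mu Delta k : R) : R :=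
  cos k * (J * cos k + mu) / eps kappa N J mu Delta k.

Definition xi_J (kappa : nat -> R) (N : nat) (J mu Delta k : R) : R :=
  Delta * fN kappa N k * cos k / (2 * (eps kappa N J mu Delta k) ^ 2).

Definition E_J (kappa : nat -> R) (N : nat) (J mu Delta T k : R) : R :=
  Ecal T (a_J kappa N J mu Delta k) (xi_J kappa N J mu Delta k) (eps kappa N J mu Delta k).

Definition kmom (N n : nat) : R := INR (2 * n + 1) * PI / INR N.

Fixpoint sum_modes (m : nat) (g : nat -> R) (P : nat -> Prop)
  (dec : forall n, {P n} + {~ P n}) : R :=
  match m with
  | O => 0
  | S m' => sum_modes m' g P dec + (if dec m' then g m' else 0)
  end.

(* Main.v *)
Require Import Defs.
From Stdlib Require Import Reals Lra Lia Psatz.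
Open Scope R_scope.

Lemma sin_sq_le x : 0 < x -> sin x ^ 2 <= x ^ 2.
Proof.
  intros Hx. destruct (Rle_lt_dec x 1) as [H1|H1].
  - assert (0 < sin x) by (apply sin_gt_0; [lra| pose proof PI2_1; lra]).
    pose proof (sin_lt_x x Hx). nra.
  - pose proof (SIN_bound x). nra.
Qed.


Lemma E_bound kappa N J mu Delta T k : 0 < T -> 0 < eps kappa N J mu Delta k ->
  E_J kappa N J mu Delta T k <= sqrt 2 * T.
Proof.
  intros HT He. unfold E_J, Ecal.
  set (e := eps kappa N J mu Delta k) in *.
  set (u := a_J kappa N J mu Delta k).
  set (v := xi_J kappa N J mu Delta k).
  set (A := Delta * fN kappa N k / 2).
  set (B := J * cos k + mu).
  assert (He2 : e ^ 2 = A ^ 2 + B ^ 2).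
  { unfold e, eps. fold A B. rewrite <- Rsqr_pow2, Rsqr_sqrt; [ring|nra]. }
  pose proof (COS_bound k) as Hc.
  assert (Hu : u * e = cos k * B) by (unfold u, a_J; fold e B; field; lra).
  assert (Hv : v * (e ^ 2) = A * cos k) by (unfold v, xi_J, A; fold e; field; lra).
  assert (Hu2 : u ^ 2 <= 1).
  { assert (cos k ^ 2 <= 1) by nra.
    assert ((u*e)^2 <= e^2).
    { rewrite Hu, He2. assert (cos k ^2 * B^2 <= B^2) by nra. nra. }
    assert (0 < e^2) by nra. nra. }
  assert (Hv2 : v ^ 2 * e ^ 2 <= 1).
  { assert (cos k ^ 2 <= 1) by nra.
    assert ((v*e^2)^2 <= e^2).
    { rewrite Hv, He2. assert (cos k ^2 * A^2 <= A^2) by nra. nra. }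
    assert (0 < e^2) by nra. nra. }
  assert (Htrig : sin (2 * e * T) ^ 2 + (1 - cos (2 * e * T)) ^ 2 = 4 * sin (e*T) ^ 2).
  { replace (2 * e * T) with (2 * (e * T)) by ring.
    rewrite sin_2a, cos_2a_sin. pose proof (sin2_cos2 (e*T)). unfold Rsqr in *. nra. }
  assert (Hs : sin (e*T) ^ 2 <= (e*T)^2) by (apply sin_sq_le; nra).
  replace (sqrt 2 * T) with (sqrt (2 * T ^ 2)).
  2:{ rewrite sqrt_mult by nra. rewrite sqrt_pow2 by lra. reflexivity. }
  apply sqrt_le_1_alt.
  assert (v ^ 2 * sin (e*T) ^ 2 <= T ^ 2).
  { assert (v^2 * sin (e*T)^2 <= v^2 * (e*T)^2) by (apply Rmult_le_compat_l; nra). nra. }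
  assert (T^2*u^2 <= T^2) by nra.
  replace (T ^ 2 * u ^ 2 + / 4 * v ^ 2 * sin (2 * e * T) ^ 2 +
     / 4 * v ^ 2 * (1 - cos (2 * e * T)) ^ 2) with
    (T ^ 2 * u ^ 2 + / 4 * v ^ 2 * (sin (2 * e * T) ^ 2 + (1 - cos (2 * e * T)) ^ 2)) by ring.
  rewrite Htrig. lra.
Qed.

Lemma E_nonneg kappa N J mu Delta T k : 0 <= E_J kappa N J mu Delta T k.
Proof. unfold E_J, Ecal. apply sqrt_pos. Qed.

Theorem mainTheorem8 (J mu Delta T : R) (kappa : nat -> R) (N : nat) :
  0 < T -> Nat.Even N -> (4 <= N)%nat ->
  (forall n : nat, (n < N)%nat ->
     0 < eps kappa N J mu Delta (kmom N n) ->
     E_J kappa N J mu Delta T (kmom N n) <= sqrt 2 * T)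
  /\
  (sum_modes N (fun n => E_J kappa N J mu Delta T (kmom N n))
     (fun n => 0 < eps kappa N J mu Delta (kmom N n))
     (fun n => Rlt_dec 0 (eps kappa N J mu Delta (kmom N n)))) ^ 2
   <= 2 * T ^ 2 * (INR N) ^ 2.
Proof.
  intros HT _ _. split.
  - intros n _ He. apply E_bound; assumption.
  - assert (Hs2 : 0 <= sqrt 2) by apply sqrt_pos.
    assert (H : forall m, 0 <= sum_modes m (fun n => E_J kappa N J mu Delta T (kmom N n))
     (fun n => 0 < eps kappa N J mu Delta (kmom N n))
     (fun n => Rlt_dec 0 (eps kappa N J mu Delta (kmom N n)))
     <= INR m * (sqrt 2 * T)).
    { induction m as [|m IH].
      - simpl. lra.
      - cbn [sum_modes]. rewrite S_INR. destruct (Rlt_dec 0 (eps kappa N J mu Delta (kmom N m))) as [h|h].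
        + pose proof (E_bound kappa N J mu Delta T (kmom N m) HT h).
          pose proof (E_nonneg kappa N J mu Delta T (kmom N m)).
          lra.
        + nra. }
    destruct (H N) as [H0 H1].
    assert (Hsq : sqrt 2 * sqrt 2 = 2) by (apply sqrt_sqrt; lra).
    assert (0 <= INR N) by apply pos_INR.
    assert (h2 : (INR N * (sqrt 2 * T))^2 = 2 * T^2 * INR N ^2).
    { replace ((INR N * (sqrt 2 * T))^2) with ((sqrt 2 * sqrt 2) * T^2 * INR N^2) by ring.
      rewrite Hsq. ring. }
    rewrite <- h2. apply pow_incr. lra.
Qed.
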